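(* For every $n\ge 4$, $w^4(P_n)\ge \lceil n/4\rceil$, where $P_n$ is the path on $n$ vertices.
   Context: All graphs are finite, simple and undirected. For a graph $G$, a permutation $\sigma$ of $V(G)$ is a 2-placement of $G$ if for every edge $ab\in E(G)$, $\sigma(a)\sigma(b)\notin E(G)$. $G^k$ denotes the $k$-th power of $G$ (same vertex set, distinct vertices adjacent iff their distance in $G$ is at most $k$); $\sigma(G)\subseteq G^k$ means that for every edge $ab$ of $G$, $dist_G(\sigma(a),\sigma(b))\le k$. A (surjective) mapping $f:V(G)\to\{1,\dots,p\}$ is a $p$-labeled-packing of $G$ into $G^k$ if there exists a permutation $\sigma$ of $V(G)$ such that $\sigma$ is a 2-placement of $G$, $\sigma(G)\subseteq G^k$, and $f(\sigma(v))=f(v)$ for every vertex $v$. The labeled packing $k$-power number $w^k(G)$ is the maximum $p$ for which $G$ admits a $p$-labeled-packing into $G^k$. *)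

(* Defs.v *)
From mathcomp Require Import all_boot all_fingroup.
Set Implicit Arguments. Unset Strict Implicit. Unset Printing Implicit Defensive.

Definition simple_graph (T : finType) (e : rel T) : Prop :=
  symmetric e /\ irreflexive e.

Definition dist_le (T : finType) (e : rel T) (k : nat) (x y : T) : Prop :=
  exists s : seq T, [/\ size s <= k, path e x s & last x s = y].

Definition two_placement (T : finType) (e : rel T) (sigma : {perm T}) : Prop :=
  forall a b, e a b -> ~~ e (sigma a) (sigma b).

Definition image_in_power (T : finType) (e : rel T) (k : nat) (sigma : {perm T}) : Prop :=
  forall a b, e a b -> dist_le e k (sigma a) (sigma b).

Definition labeled_packing (T : finType) (e : rel T) (k p : nat) (f : T -> nat) : Prop :=
  [/\ (forall v, 1 <= f v <= p),
      (forall i, 1 <= i <= p -> exists v, f v = i) &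
      exists sigma : {perm T},
        [/\ two_placement e sigma, image_in_power e k sigma &
            forall v, f (sigma v) = f v]].

Definition admits_labeled_packing (T : finType) (e : rel T) (k p : nat) : Prop :=
  exists f : T -> nat, labeled_packing e k p f.

(* w^k(G) >= m  (w^k(G) is the maximum p admitting a packing) *)
Definition wk_ge (T : finType) (e : rel T) (k m : nat) : Prop :=
  exists2 p, m <= p & admits_labeled_packing e k p.

Definition path_graph (n : nat) : rel 'I_n :=
  fun i j => (i.+1 == j :> nat) || (j.+1 == i :> nat).
Arguments path_graph n : clear implicits.

(* Main.v *)
Require Import Defs.
From mathcomp Require Import all_boot all_fingroup zify.
Definition p4 j := match j with 0=>1|1=>3|2=>0|_=>2 end.
Definition p4i j := match j with 0=>2|1=>0|2=>3|_=>1 end.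
Definition tau r j := match r with
 | 4 => p4 j
 | 5 => match j with 0=>0|1=>2|2=>4|3=>1|_=>3 end
 | 6 => match j with 0=>0|1=>2|2=>4|3=>1|4=>3|_=>5 end
 | _ => match j with 0=>0|1=>2|2=>4|3=>1|4=>5|5=>3|_=>6 end end.
Definition taui r j := match r with
 | 4 => p4i j
 | 5 => match j with 0=>0|1=>3|2=>1|3=>4|_=>2 end
 | 6 => match j with 0=>0|1=>3|2=>1|3=>4|4=>2|_=>5 end
 | _ => match j with 0=>0|1=>3|2=>1|3=>5|4=>2|5=>4|_=>6 end end.
Definition mm n := 4 * (n %/ 4 - 1).
Definition sg n i := if i < mm n then 4 * (i %/ 4) + p4 (i %% 4)
  else mm n + tau (n - mm n) (i - mm n).
Definition sgi n i := if i < mm n then 4 * (i %/ 4) + p4i (i %% 4)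
  else mm n + taui (n - mm n) (i - mm n).

Ltac nomatch x := lazymatch x with
  | context [match _ with _ => _ end] => fail
  | _ => idtac end.
Ltac crush := cbv [sg sgi p4 p4i tau taui] in *;
  repeat match goal with
  | |- context [match ?x with _ => _ end] => nomatch x; let E := fresh "E" in destruct x eqn:E; try (exfalso; lia)
  end; lia.

Lemma sg_lt n i : 4 <= n -> i < n -> sg n i < n.
Proof. move=> h1 h2. have hm : mm n = 4 * (n %/ 4 - 1) by []. crush. Qed.
Lemma sg_inv n i : 4 <= n -> i < n -> sgi n (sg n i) = i.
Proof. move=> h1 h2. have hm : mm n = 4 * (n %/ 4 - 1) by []. crush. Qed.
Lemma sg_edge n i : 4 <= n -> i.+1 < n ->
  [/\ sg n i + 1 <> sg n i.+1, sg n i.+1 + 1 <> sg n i,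
      sg n i <= sg n i.+1 + 4 & sg n i.+1 <= sg n i + 4].
Proof. move=> h1 h2. have hm : mm n = 4 * (n %/ 4 - 1) by [].
split; crush. Qed.
Lemma walk_up n d : forall (x y : 'I_n), val y = val x + d -> dist_le (path_graph n) d x y.
Proof.
elim: d => [|d IH] x y hy.
  exists [::]; split => //=. by apply/val_inj; rewrite /= hy addn0.
have hy' : y.-1 < n by case: y hy => /= y Hy _; lia.
have [s [h1 h2 h3]] : dist_le (path_graph n) d x (Ordinal hy') by apply: IH => /=; rewrite hy addnS.
exists (rcons s y); split.
- by rewrite size_rcons.
- rewrite rcons_path h2 h3 /= /path_graph /=. apply/orP; left; apply/eqP; by rewrite /= hy addnS.
- by rewrite last_rcons.
Qed.
Lemma walk_down n d : forall (x y : 'I_n), val x = val y + d -> dist_le (path_graph n) d x y.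
Proof.
elim: d => [|d IH] x y hy.
  exists [::]; split => //=. by apply/val_inj; rewrite /= hy addn0.
have hy' : y.+1 < n by case: x hy => /= x Hx hx; lia.
have [s [h1 h2 h3]] : dist_le (path_graph n) d x (Ordinal hy') by apply: IH => /=; rewrite hy addnS addSn.
exists (rcons s y); split.
- by rewrite size_rcons.
- rewrite rcons_path h2 h3 /= /path_graph /=. apply/orP; right; apply/eqP; lia.
- by rewrite last_rcons.
Qed.
Lemma dist_mono n k k' (x y : 'I_n) : k <= k' -> dist_le (path_graph n) k x y -> dist_le (path_graph n) k' x y.
Proof. move=> hk [s [h1 h2 h3]]; exists s; split => //; lia. Qed.
Lemma dist4 n (x y : 'I_n) : val x <= val y + 4 -> val y <= val x + 4 -> dist_le (path_graph n) 4 x y.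
Proof.
move=> h1 h2. case: (leqP (val x) (val y)) => h.
- apply: (@dist_mono n (val y - val x)); first lia. apply: walk_up; lia.
- apply: (@dist_mono n (val x - val y)); first lia. apply: walk_down; lia.
Qed.
Definition lab n i := if i < mm n then i %/ 4 + 1
  else n %/ 4 + (if (0 < i - mm n) && (4 < n - mm n) then 1 else 0).
Lemma lab_sg n i : 4 <= n -> i < n -> lab n (sg n i) = lab n i.
Proof. move=> h1 h2. have hm : mm n = 4 * (n %/ 4 - 1) by []. rewrite /lab. crush. Qed.
Lemma lab_range n i : 4 <= n -> i < n -> 1 <= lab n i <= (n + 3) %/ 4.
Proof. move=> h1 h2. have hm : mm n = 4 * (n %/ 4 - 1) by []. rewrite /lab. crush. Qed.
Lemma lab_surj n l : 4 <= n -> 1 <= l <= (n + 3) %/ 4 -> exists v, v < n /\ lab n v = l.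
Proof. move=> h1 h2. have hm : mm n = 4 * (n %/ 4 - 1) by [].
exists (if l < n %/ 4 then 4 * (l - 1) else if l == n %/ 4 then mm n else mm n + 1).
rewrite /lab; split; crush. Qed.

Theorem corollary1p2 (n : nat) : 4 <= n ->
  wk_ge (path_graph n) 4 ((n + 3) %/ 4).
Proof.
move=> hn. exists ((n + 3) %/ 4) => //.
pose sgo (i : 'I_n) : 'I_n := insubd i (sg n i).
have vs : forall i, val (sgo i) = sg n i.
  by move=> i; rewrite val_insubd sg_lt.
have inj : injective sgo.
  move=> i j h; apply: ord_inj.
  by rewrite -(sg_inv _ _ hn (ltn_ord i)) -(sg_inv _ _ hn (ltn_ord j)) -!vs h.
exists (fun v : 'I_n => lab n v); split.
- by move=> v; apply: lab_range.
- move=> l hl. have [v [hv hlv]] := lab_surj n l hn hl.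
  by exists (Ordinal hv).
- exists (perm inj); split.
  + move=> a b; rewrite !permE /path_graph !vs => /orP [] /eqP hab.
    * have hb := ltn_ord b. rewrite -hab in hb.
      have [e1 e2 e3 e4] := sg_edge n a hn hb. rewrite -hab.
      apply/negP => /orP [] /eqP; lia.
    * have ha := ltn_ord a. rewrite -hab in ha.
      have [e1 e2 e3 e4] := sg_edge n b hn ha. rewrite -hab.
      apply/negP => /orP [] /eqP; lia.
  + move=> a b; rewrite !permE /path_graph => /orP [] /eqP hab.
    * have hb := ltn_ord b. rewrite -hab in hb.
      have [e1 e2 e3 e4] := sg_edge n a hn hb.
      apply: dist4; rewrite !vs -hab; lia.
    * have ha := ltn_ord a. rewrite -hab in ha.
      have [e1 e2 e3 e4] := sg_edge n b hn ha.
      apply: dist4; rewrite !vs -hab; lia.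
  + by move=> v; rewrite permE vs lab_sg ?ltn_ord.

Qed.
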